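(* Let $A\in\mathbb{C}^{n\times n}$ with $ind(A)=k$, fix $A^-\in A\{1\}$ and $A^{GD}\in A\{GD\}$, and let $A^{GD1}=A^{GD}AA^-$. Then: (i) there exist idempotent matrices $M,N\in\mathbb{C}^{n\times n}$ such that $A^kA^{-}M=0$, $MA^k=0$, $NA^kA^{-}=0$, $A^kN=0$; (ii) there exists a matrix $X\in\mathbb{C}^{n\times n}$ such that $$\mathrm{rank}\begin{bmatrix} A & I-M\\ I-N & X\end{bmatrix}=\mathrm{rank}(A).$$ Moreover, these hold with $M=I-AA^{GD1}$, $N=I-A^{GD1}A$, and $X=A^{GD1}$.
   Context: For $A\in\mathbb{C}^{n\times n}$, $ind(A)$ is the smallest nonnegative integer $k$ with $\mathrm{rank}(A^k)=\mathrm{rank}(A^{k+1})$; $A^0=I$. $A\{1\}$ is the set of matrices $X$ with $AXA=A$. $A\{GD\}$ is the set of G-Drazin inverses of $A$: matrices $X$ with $AXA=A$, $XA^{k+1}=A^k$, $A^{k+1}X=A^k$. *)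

(* Defs.v *)
(* Complex matrices: 'M[R[i]]_n with R : realType, so R[i] is C. *)
From HB Require Import structures.
From mathcomp Require Import all_boot all_order all_algebra.
From mathcomp Require Import complex.
From mathcomp Require Import reals.
Set Implicit Arguments. Unset Strict Implicit. Unset Printing Implicit Defensive.
Import Order.TTheory GRing.Theory Num.Theory.
Local Open Scope ring_scope.

Definition mxpow (F : fieldType) (n : nat) (A : 'M[F]_n) (k : nat) : 'M[F]_n :=
  iter k (mulmx A) 1%:M.

Definition is_index (F : fieldType) (n : nat) (A : 'M[F]_n) (k : nat) : Prop :=
  \rank (mxpow A k) = \rank (mxpow A k.+1) /\
  forall j, (j < k)%N -> \rank (mxpow A j) <> \rank (mxpow A j.+1).

Definition inner_inverse (F : fieldType) (n : nat) (A X : 'M[F]_n) : Prop :=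
  A *m X *m A = A.

Definition GD_inverse (F : fieldType) (n : nat) (A X : 'M[F]_n) (k : nat) : Prop :=
  A *m X *m A = A /\ X *m mxpow A k.+1 = mxpow A k /\ mxpow A k.+1 *m X = mxpow A k.

Definition idempotent_mx (F : fieldType) (n : nat) (M : 'M[F]_n) : Prop :=
  M *m M = M.

Definition thm_props (F : fieldType) (n k : nat) (A Am M N X : 'M[F]_n) : Prop :=
  (idempotent_mx M /\ idempotent_mx N /\
   mxpow A k *m Am *m M = 0 /\ M *m mxpow A k = 0 /\
   N *m mxpow A k *m Am = 0 /\ mxpow A k *m N = 0) /\
  \rank (block_mx A (1%:M - M) (1%:M - N) X) = \rank A.

(* Main.v *)
Require Import Defs.
From HB Require Import structures.
From mathcomp Require Import all_boot all_order all_algebra.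
From mathcomp Require Import complex.
From mathcomp Require Import reals.
Import Order.TTheory GRing.Theory Num.Theory.
Local Open Scope ring_scope.

Lemma mxpowSr (F : fieldType) n (A : 'M[F]_n) k :
  mxpow A k.+1 = mxpow A k *m A.
Proof.
elim: k => [|k IH]; first by rewrite /mxpow /= mulmx1 mul1mx.
have -> : mxpow A k.+2 = A *m mxpow A k.+1 by [].
by rewrite {1}IH mulmxA.
Qed.

Lemma idem_compl (F : fieldType) n (P : 'M[F]_n) :
  P *m P = P -> (1%:M - P) *m (1%:M - P) = 1%:M - P.
Proof. by move=> H; rewrite mulmxBl !mulmxBr !mul1mx mulmx1 H subrr subr0. Qed.

Lemma key (F : fieldType) n k (A Am G : 'M[F]_n) :
  A *m Am *m A = A -> GD_inverse A G k ->
  thm_props k A Am (1%:M - A *m (G *m A *m Am)) (1%:M - (G *m A *m Am) *m A)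
    (G *m A *m Am).
Proof.
move=> hAm [hG [h1 h2]].
have eM : 1%:M - A *m (G *m A *m Am) = 1%:M - A *m Am by rewrite !mulmxA hG.
have eGA : G *m A *m Am *m A = G *m A.
  by rewrite -!mulmxA (mulmxA A Am A) hAm.
rewrite eM eGA.
have iM : A *m Am *m (A *m Am) = A *m Am by rewrite mulmxA hAm.
have iN : G *m A *m (G *m A) = G *m A.
  by rewrite mulmxA -(mulmxA G A G) -mulmxA hG.
split; last first.
  rewrite !subKr.
  apply/eqP; rewrite eqn_leq; apply/andP; split.
    have -> : block_mx A (A *m Am) (G *m A) (G *m A *m Am)
       = col_mx 1%:M G *m A *m row_mx 1%:M Am.
      by rewrite mul_col_mx mul1mx mul_col_mx !mul_mx_row !mulmx1.
    exact: leq_trans (mxrankM_maxl _ _) (mxrankM_maxr _ _).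
  have eA : A = row_mx 1%:M 0 *m block_mx A (A *m Am) (G *m A) (G *m A *m Am)
      *m col_mx 1%:M 0.
    by rewrite mul_row_block mul_row_col !mul1mx !mul0mx !addr0 mulmx1 mulmx0 addr0.
  rewrite {1}eA.
  apply: (leq_trans (mxrankM_maxl _ _)); exact: mxrankM_maxr.
split; first exact: idem_compl.
split; first exact: idem_compl.
case: k h1 h2 => [|k] h1 h2.
  rewrite /mxpow /= mulmx1 in h1 h2.
  have eAm : Am = G.
    by rewrite -[Am]mul1mx -h1 -[_ *m Am]mulmx1 -h2 !mulmxA -(mulmxA G A Am)
      -(mulmxA G (A *m Am) A) hAm -mulmxA h2 mulmx1.
  rewrite eAm h2 h1 !subrr /mxpow /= !mulmx0 !mul0mx.
  by [].
have PA : mxpow A k.+1 = A *m mxpow A k by [].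
have hP : mxpow A k.+1 *m Am *m A = mxpow A k.+1.
  by rewrite mxpowSr -!mulmxA (mulmxA A Am A) hAm.
have hPG : mxpow A k.+1 *m G *m A = mxpow A k.+1.
  by rewrite mxpowSr -!mulmxA (mulmxA A G A) hG.
split; first by rewrite mulmxBr mulmx1 mulmxA hP subrr.
split; first by rewrite mulmxBl mul1mx {2}PA mulmxA hAm -PA subrr.
split; first by rewrite mulmxBl mul1mx -(mulmxA G A) -/(mxpow A k.+2) h1 mulmxBl subrr.
by rewrite mulmxBr mulmx1 mulmxA hPG subrr.
Qed.

Theorem theorem2p9 (R : realType) (n k : nat) (A Am AGD : 'M[R[i]]_n) :
  is_index A k -> inner_inverse A Am -> GD_inverse A AGD k ->
  let AGD1 := AGD *m A *m Am in
  (exists M N X : 'M[R[i]]_n, thm_props k A Am M N X) /\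
  thm_props k A Am (1%:M - A *m AGD1) (1%:M - AGD1 *m A) AGD1.
Proof.
move=> _ hAm hG AGD1.
have H := @key _ _ _ _ _ _ hAm hG.
split; last exact: H.
by exists (1%:M - A *m AGD1), (1%:M - AGD1 *m A), AGD1.
Qed.
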